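(* Let $r\in\mathbb N$ and let $M$ be the sub-add move matrix. For every $0\le i<2r$, each vertex of $\mathcal P_i$ has a unique child in $\Gamma_{M,\,2^r}$, and this child lies in $\mathcal P_{i+1}$. The vertex $(0,0)\in\mathcal P_{2r}$ is its own unique child.
   Context: The sub-add move matrix is $M=\begin{pmatrix}1&-1\\1&1\end{pmatrix}$. For $n\in\mathbb N$, $\Gamma_{M,\,n}$ is the directed graph with vertex set $\mathbb Z_n^2$ and arcs $((a,b),(a-b,a+b))$ for all $(a,b)\in\mathbb Z_n^2$ (computed mod $n$; loops allowed). If $({\bf v},{\bf w})$ is an arc, ${\bf v}$ is a parent of ${\bf w}$ and ${\bf w}$ a child of ${\bf v}$. For $n=2^r$, partition $\mathbb Z_{2^r}^2$ as follows: for $0\le t\le r-1$, $\mathcal P_{2t}$ is the set of pairs $(2^tx,2^ty)\in\mathbb Z_{2^r}^2$ with $x,y$ integers exactly one of which is odd, and $\mathcal P_{2t+1}$ is the set of pairs $(2^tx,2^ty)$ with $x,y$ both odd; $\mathcal P_{2r}=\{(0,0)\}$. (Parities are well defined since $x,y$ are determined modulo $2^{r-t}$ with $r-t\ge1$.) *)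

(* Defs.v *)
From mathcomp Require Import all_boot all_order all_algebra.
Set Implicit Arguments. Unset Strict Implicit. Unset Printing Implicit Defensive.
Import GRing.Theory Num.Theory.
Local Open Scope ring_scope.

(* Vertices of Gamma_{M, 2^r}: Z_{2^r}^2, residues represented by 'I_(2^r). *)
Definition vert (r : nat) : Type := ('I_(2 ^ r) * 'I_(2 ^ r))%type.

(* Arc relation of Gamma_{M,n} for M = [[1,-1],[1,1]] and n = 2^r:
   ((a,b),(a-b,a+b)) computed mod n.  Residues computed in int. *)
Definition subadd_arc (r : nat) (v w : vert r) : Prop :=
  let n := (2 ^ r)%N%:Z in
  (w.1 : nat)%:Z = (((v.1 : nat)%:Z - (v.2 : nat)%:Z) %% n)%Z /\
  (w.2 : nat)%:Z = (((v.1 : nat)%:Z + (v.2 : nat)%:Z) %% n)%Z.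

Definition Ppart (r i : nat) (v : vert r) : Prop :=
  let n := (2 ^ r)%N%:Z in
  (exists t : nat, (t < r)%N /\ i = (2 * t)%N /\
     exists x y : int, odd `|x|%N != odd `|y|%N /\
       (v.1 : nat)%:Z = (((2 ^ t)%N%:Z * x) %% n)%Z /\
       (v.2 : nat)%:Z = (((2 ^ t)%N%:Z * y) %% n)%Z)
  \/
  (exists t : nat, (t < r)%N /\ i = (2 * t).+1 /\
     exists x y : int, odd `|x|%N /\ odd `|y|%N /\
       (v.1 : nat)%:Z = (((2 ^ t)%N%:Z * x) %% n)%Z /\
       (v.2 : nat)%:Z = (((2 ^ t)%N%:Z * y) %% n)%Z)
  \/
  (i = (2 * r)%N /\ (v.1 : nat) = 0%N /\ (v.2 : nat) = 0%N).
Arguments subadd_arc r v w : clear implicits.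
Arguments Ppart r i v : clear implicits.

(* Main.v *)
Require Import Defs.
From mathcomp Require Import all_boot all_order all_algebra.
From mathcomp Require Import zify.
Import GRing.Theory Num.Theory.
Local Open Scope ring_scope.

Lemma arc_uniq r (v w1 w2 : vert r) :
  subadd_arc r v w1 -> subadd_arc r v w2 -> w1 = w2.
Proof.
case: w1 w2 => [a1 b1] [a2 b2] [/= h1 h2] [/= h3 h4].
rewrite -h3 in h1; rewrite -h4 in h2.
by case: h1 => /val_inj ->; case: h2 => /val_inj ->.
Qed.

Lemma mkord r (m : int) : exists o : 'I_(2 ^ r),
  (o : nat)%:Z = (m %% (2 ^ r)%N%:Z)%Z.
Proof.
have n0 : (2 ^ r)%N%:Z != 0 by rewrite eqz_nat expn_eq0.
have h1 := modz_ge0 m n0.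
have h2 : (m %% (2 ^ r)%N%:Z < (2 ^ r)%N%:Z)%Z.
  by have := ltz_pmod m (_ : 0 < (2 ^ r)%N%:Z); apply; rewrite ltz_nat expn_gt0.
have hlt : (absz (m %% (2 ^ r)%N%:Z)%Z < 2 ^ r)%N.
  by rewrite -ltz_nat gez0_abs.
by exists (Ordinal hlt); rewrite /= gez0_abs.
Qed.

Lemma modB (a b n : int) : (((a %% n)%Z - (b %% n)%Z) %% n = (a - b) %% n)%Z.
Proof. by rewrite modzDml -modzDmr modzNm modzDmr. Qed.
Lemma modD (a b n : int) : (((a %% n)%Z + (b %% n)%Z) %% n = (a + b) %% n)%Z.
Proof. by rewrite modzDml modzDmr. Qed.

Lemma child r (v w : vert r) (c x y : int) :
  subadd_arc r v w ->
  (v.1 : nat)%:Z = ((c * x) %% (2 ^ r)%N%:Z)%Z ->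
  (v.2 : nat)%:Z = ((c * y) %% (2 ^ r)%N%:Z)%Z ->
  (w.1 : nat)%:Z = ((c * (x - y)) %% (2 ^ r)%N%:Z)%Z /\
  (w.2 : nat)%:Z = ((c * (x + y)) %% (2 ^ r)%N%:Z)%Z.
Proof.
move=> [h1 h2] e1 e2; rewrite h1 h2 e1 e2 modB modD.
by rewrite mulrBr mulrDr.
Qed.

Theorem proposition5p2 (r : nat) :
  (forall (i : nat) (v : vert r), (i < 2 * r)%N -> Ppart r i v ->
     (exists! w : vert r, subadd_arc r v w) /\
     (forall w : vert r, subadd_arc r v w -> Ppart r i.+1 w))
  /\
  (forall v : vert r, Ppart r (2 * r) v ->
     forall w : vert r, subadd_arc r v w <-> w = v).
Proof.
split.
- move=> i v hi hP; split.
  + have [a ha] := mkord r ((v.1 : nat)%:Z - (v.2 : nat)%:Z).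
    have [b hb] := mkord r ((v.1 : nat)%:Z + (v.2 : nat)%:Z).
    exists (a, b); split; first by split.
    by move=> w' h; apply: arc_uniq h; split.
  + move=> w harc.
    case: hP => [[t [ht [-> [x [y [hxy [e1 e2]]]]]]]
               | [[t [ht [-> [x [y [hx [hy [e1 e2]]]]]]]] | [ei _]]].
    * have [f1 f2] := @child r v w _ _ _ harc e1 e2.
      right; left; exists t; split => //; split => //.
      exists (x - y), (x + y); split; first by clear -hxy; lia.
      by split; [clear -hxy; lia | split].
    * have [f1 f2] := @child r v w _ _ _ harc e1 e2.
      have [x' [y' [ex [ey hodd]]]] : exists x' y' : int,
          x - y = 2 * x' /\ x + y = 2 * y' /\ odd (absz x') != odd (absz y').
        by clear -hx hy; exists ((x - y) %/ 2)%Z, ((x + y) %/ 2)%Z; lia.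
      rewrite ex mulrA in f1; rewrite ey mulrA in f2.
      have e2t : (2 ^ t)%N%:Z * 2 = (2 ^ t.+1)%N%:Z by rewrite expnSr PoszM.
      rewrite e2t in f1 f2.
      case: (ltnP t.+1 r) => htr.
      -- left; exists t.+1; split => //; split; first by clear -htr; lia.
         by exists x', y'; split => //; split.
      -- have er : t.+1 = r by clear -ht htr; lia.
         rewrite er modzMr in f1; rewrite er modzMr in f2.
         right; right; split; first by rewrite -er; clear; lia.
         by split; apply/eqP; rewrite -eqz_nat; apply/eqP.
    * by rewrite ei ltnn in hi.
- move=> v hP w.
  case: hP => [[t [ht [ei _]]] | [[t [ht [ei _]]] | [_ [e1 e2]]]];
    try (exfalso; clear -ht ei; lia).
  have hvv : subadd_arc r v v.
    by split; rewrite e1 e2 /= mod0z.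
  split; first by move=> h; apply: arc_uniq h hvv.
  by move=> ->.
Qed.
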